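(* Let $i,h$ be receivers with $\psi_i>\psi_h\ge 1$ and $\varrho_i<\varrho_h$. Then $\mathbb E[\Delta_h]>\mathbb E[\Delta_i]$, where $\mathbb E[\Delta_r]$ denotes the expected primary degree of a vertex induced by receiver $r$.
   Context: A sender holds a frame $\mathcal N$ of $N\ge2$ packets and serves receivers $\mathcal M=\{1,\dots,M\}$. For each receiver $r$ there are sets $\mathcal H_r\subseteq\mathcal N$ (Has set), $\mathcal L_r=\mathcal N\setminus\mathcal H_r$ (Lacks set) and $\mathcal W_r\subseteq\mathcal L_r$ (Wants set), with cardinalities $\varrho_r=|\mathcal H_r|$, $\varphi_r=N-\varrho_r$, $\psi_r=|\mathcal W_r|$. The primary IDNC graph $\mathcal G_\rho$ has a vertex $v_{rj}$ for every receiver $r$ and every $j\in\mathcal W_r$; two distinct vertices $v_{rj},v_{kl}$ are adjacent iff (C1) $j=l$, or (C2) $j\in\mathcal H_k$ and $l\in\mathcal H_r$. The primary degree of a vertex is its degree in $\mathcal G_\rho$. Expectations are taken in the model that ignores set contents: given the cardinalities, the pairs $(\mathcal H_k,\mathcal W_k)$, $k\in\mathcal M$, are independent, $\mathcal H_k$ is a uniformly random $\varrho_k$-element subset of $\mathcal N$, and given $\mathcal H_k$, $\mathcal W_k$ is a uniformly random $\psi_k$-element subset of $\mathcal N\setminus\mathcal H_k$. For a receiver $r$ with $\psi_r\ge1$, $\mathbb E[\Delta_r]$ is the expected primary degree of $v_{rj}$ conditioned on $j\in\mathcal W_r$ (independent of the packet $j$). *)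

(* Defs.v *)
From mathcomp Require Import all_boot all_order all_algebra.
Set Implicit Arguments. Unset Strict Implicit. Unset Printing Implicit Defensive.
Import GRing.Theory Num.Theory.

Notation config N M := {ffun 'I_M -> {set 'I_N} * {set 'I_N}}.

Definition Has N M (c : config N M) (k : 'I_M) : {set 'I_N} := (c k).1.
Definition Lacks N M (c : config N M) (k : 'I_M) : {set 'I_N} := ~: Has c k.
Definition Wants N M (c : config N M) (k : 'I_M) : {set 'I_N} := (c k).2.

Definition valid_config N M (rho psi : 'I_M -> nat) (c : config N M) : bool :=
  [forall k, [&& #|Has c k| == rho k, Wants c k \subset Lacks c k
             & #|Wants c k| == psi k]].

(* Vertices of the primary IDNC graph: v_{kl} for l in W_k. *)
Definition is_vertex N M (c : config N M) (v : 'I_M * 'I_N) : bool :=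
  v.2 \in Wants c v.1.

Definition adjacent N M (c : config N M) (u v : 'I_M * 'I_N) : bool :=
  [&& u != v, is_vertex c u, is_vertex c v &
      (u.2 == v.2) || ((u.2 \in Has c v.1) && (v.2 \in Has c u.1))].

Definition primary_degree N M (c : config N M) (v : 'I_M * 'I_N) : nat :=
  #|[set w | adjacent c v w]|.

(* Expected primary degree of v_{rj} conditioned on j in W_r, in the model where the
   (H_k, W_k) are independent, H_k uniform rho_k-subset, W_k uniform psi_k-subset of
   the complement.  This model is exactly the uniform distribution on valid
   configurations (each receiver has the same number of admissible pairs). *)
Definition expected_degree N M (rho psi : 'I_M -> nat) (r : 'I_M) (j : 'I_N) : rat :=
  let S := [set c : config N M | valid_config rho psi c && (j \in Wants c r)] in
  ((\sum_(c in S) (primary_degree c (r, j))%:R) / (#|S|)%:R)%R.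

(* Main.v *)
Require Import Defs.
From mathcomp Require Import all_boot all_order all_algebra all_fingroup.
Set Implicit Arguments. Unset Strict Implicit. Unset Printing Implicit Defensive.

Section Sym.
Variable N : nat.
Notation T := ({set 'I_N} * {set 'I_N})%type.

Definition vp (a b : nat) (p : T) : bool :=
  [&& #|p.1| == a, p.2 \subset ~: p.1 & #|p.2| == b].

Definition act (t : 'I_N -> 'I_N) (p : T) : T := (t @: p.1, t @: p.2).

Lemma imset_invol (t : 'I_N -> 'I_N) (A : {set 'I_N}) :
  involutive t -> t @: (t @: A) = A.
Proof.
move=> ht; rewrite -imset_comp -[RHS]imset_id; apply: eq_imset => x /=; exact: ht.
Qed.

Lemma act_invol t : involutive t -> involutive (act t).
Proof. by move=> ht [A B]; rewrite /act /= !imset_invol. Qed.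

Lemma vp_act t a b p : involutive t -> vp a b (act t p) = vp a b p.
Proof.
move=> ht; have ti : injective t := inv_inj ht.
rewrite /vp /act /= !card_imset //.
congr [&& _, _ & _].
apply/subsetP/subsetP => H x.
- move=> xB; have := H (t x) (imset_f _ xB); rewrite !inE mem_imset //.
- move=> /imsetP [y yB ->]; have := H y yB; rewrite !inE mem_imset //.
Qed.

Lemma sum_sym t a b (P : pred T) : involutive t ->
  \sum_(p : T) (vp a b p && P p) = \sum_(p : T) (vp a b p && P (act t p)).
Proof.
move=> ht; rewrite (reindex_inj (inv_inj (act_invol ht))) /=.
by apply: eq_bigr => p _; rewrite vp_act.
Qed.

Lemma mem_act t x (A : {set 'I_N}) : involutive t -> (t x \in t @: A) = (x \in A).
Proof. by move=> ht; rewrite mem_imset //; exact: inv_inj. Qed.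

Lemma dcount (Q : pred T) (f : T -> {set 'I_N}) :
  \sum_(l : 'I_N) \sum_(p : T) (Q p && (l \in f p)) = \sum_(p : T) Q p * #|f p|.
Proof.
rewrite exchange_big /=; apply: eq_bigr => p _.
case: (Q p) => /=; last by rewrite big1.
rewrite mul1n -sum1_card [RHS]big_mkcond /=; apply: eq_bigr => l _; by case: (l \in f p).
Qed.

Definition cA a b := \sum_(p : T) vp a b p.

Lemma count1 a b n (f : T -> {set 'I_N}) (j : 'I_N) :
  (forall t p, f (act t p) = t @: f p) ->
  (forall p, vp a b p -> #|f p| = n) ->
  N * \sum_(p : T) (vp a b p && (j \in f p)) = n * cA a b.
Proof.
move=> hf hn.
have E : forall l : 'I_N, \sum_(p : T) (vp a b p && (l \in f p)) =
                          \sum_(p : T) (vp a b p && (j \in f p)).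
  move=> l; rewrite [RHS](sum_sym _ _ _ (tpermK l j)); apply: eq_bigr => p _.
  rewrite hf; congr (nat_of_bool (_ && _)).
  by rewrite -[X in _ = (X \in _)](tpermL l j) mem_act //; exact: tpermK.
have := dcount (vp a b) f; rewrite (eq_bigr _ (fun l _ => E l)) sum_nat_const card_ord => ->.
rewrite /cA big_distrr /=; apply: eq_bigr => p _.
case hp: (vp a b p) => /=; last by rewrite mul0n muln0.
by rewrite hn // mul1n muln1.
Qed.

Lemma count2 a b n (f g : T -> {set 'I_N}) (j l : 'I_N) :
  (forall t p, f (act t p) = t @: f p) ->
  (forall t p, g (act t p) = t @: g p) ->
  (forall p, vp a b p -> #|g p| = n) ->
  (forall p, vp a b p -> j \in f p -> j \notin g p) ->
  l != j ->
  N.-1 * \sum_(p : T) [&& vp a b p, j \in f p & l \in g p] =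
    n * \sum_(p : T) (vp a b p && (j \in f p)).
Proof.
move=> hf hg hn hd lj.
have := dcount (fun p => vp a b p && (j \in f p)) g.
rewrite (bigD1 j) //= big1 ?add0n; last first.
  move=> p _; case hp: (vp a b p); case hj: (j \in f p) => //=.
  by rewrite (negbTE (hd p hp hj)).
have E : forall l' : 'I_N, l' != j ->
   \sum_(p : T) (vp a b p && (j \in f p) && (l' \in g p)) =
   \sum_(p : T) [&& vp a b p, j \in f p & l \in g p].
  move=> l' l'j; rewrite (sum_sym _ _ _ (tpermK l' l)) /=; apply: eq_bigr => p _.
  rewrite hf hg -andbA; congr (nat_of_bool (_ && (_ && _))).
    by rewrite -[X in _ = (X \in _)](tpermD l'j lj) mem_act //; exact: tpermK.
  by rewrite -[X in _ = (X \in _)](tpermL l' l) mem_act //; exact: tpermK.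
rewrite (eq_bigr _ E) sum_nat_const cardC1 card_ord => ->.
rewrite big_distrr /=; apply: eq_bigr => p _.
case hp: (vp a b p) => /=; last by rewrite mul0n muln0.
case: (j \in f p) => /=; last by rewrite mul0n muln0.
by rewrite hn // mul1n muln1.
Qed.

Lemma exists_sub (B : {set 'I_N}) k : k <= #|B| -> exists2 A : {set 'I_N}, A \subset B & #|A| = k.
Proof.
move=> hk; have : 0 < #|[set A : {set 'I_N} | (A \subset B) && (#|A| == k)]| by rewrite cards_draws bin_gt0.
by case/card_gt0P => A; rewrite inE => /andP [hA /eqP hc]; exists A.
Qed.

Lemma cA_gt0 a b : a + b <= N -> 0 < cA a b.
Proof.
move=> hab.
have [H _ hH] : exists2 H : {set 'I_N}, H \subset setT & #|H| = a.
  by apply: exists_sub; rewrite cardsT card_ord (leq_trans (leq_addr b a)).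
have [W hW hW'] : exists2 W : {set 'I_N}, W \subset ~: H & #|W| = b.
  apply: exists_sub; have := cardsC H; rewrite card_ord hH => e.
  by rewrite -(leq_add2l a) e.
rewrite /cA (bigD1 (H, W)) //= ltn_addr //.
by rewrite /vp /= hH hW hW' !eqxx.
Qed.
End Sym.
Lemma sum_family2 (M : nat) (T' : finType) (F : 'I_M -> pred T') r k (u v : T' -> nat) :
  r != k ->
  \sum_(c in family F) u (c r) * v (c k) =
  (\sum_(p in F r) u p) * (\sum_(q in F k) v q) * \prod_(x | (x != r) && (x != k)) #|F x|.
Proof.
move=> rk.
pose w x p := if x == r then u p else if x == k then v p else 1.
have E : \prod_x \sum_(p | F x p) w x p = \sum_(c in family F) \prod_x w x (c x).
  exact: bigA_distr_big_dep.
rewrite (bigD1 r) // (bigD1 k) /= in E; last by rewrite eq_sym.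
rewrite /w eqxx eq_sym (negbTE rk) eqxx mulnA in E.
rewrite (eq_bigr (fun x => #|F x|)) in E; last first.
  by move=> x /andP [xr xk]; rewrite (negbTE xr) (negbTE xk) sum1_card.
rewrite E; apply: eq_bigr => c _.
rewrite (bigD1 r) // (bigD1 k) /=; last by rewrite eq_sym.
rewrite eqxx eq_sym (negbTE rk) eqxx big1 ?muln1 ?mulnA //.
by move=> x /andP [xr xk]; rewrite (negbTE xr) (negbTE xk).
Qed.
Lemma deg_decomp N M (c : config N M) r j :
  (forall k, (c k).2 \subset ~: (c k).1) -> j \in (c r).2 ->
  primary_degree c (r, j) = \sum_(k | k != r) \sum_(l : 'I_N)
     ((l == j) * (l \in (c k).2) + (l \in (c r).1) * ((j \in (c k).1) * (l \in (c k).2))).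
Proof.
move=> hsub hj.
have hjr : j \notin (c r).1 by have := subsetP (hsub r) j hj; rewrite inE.
rewrite /primary_degree -sum1_card big_mkcond /=.
transitivity (\sum_k \sum_l (if (k, l) \in [set w | adjacent c (r, j) w] then 1 else 0)).
  by rewrite pair_bigA; apply: eq_bigr => -[k l] _.
rewrite (bigD1 r) //= big1 ?add0n; last first.
  move=> l _; rewrite inE /adjacent /is_vertex /Has /Wants /= hj /=.
  rewrite (negbTE hjr) /= orbF.
  by case: (j =P l) => [<-|]; rewrite ?eqxx ?andbF ?andbT.
apply: eq_bigr => k kr; apply: eq_bigr => l _.
rewrite inE /adjacent /is_vertex /Has /Wants /= hj /=.
have -> : ((r, j) != (k, l)) by apply/eqP => -[/eqP]; rewrite eq_sym (negbTE kr).
rewrite /=.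
case lk: (l \in (c k).2) => /=; last by rewrite !muln0 addn0.
have lnk : l \notin (c k).1 by have := subsetP (hsub k) l lk; rewrite inE.
rewrite eq_sym; case: eqP => [->|_] /=.
  by rewrite (negbTE hjr).
by case: (j \in (c k).1); case: (l \in (c r).1).
Qed.

From mathcomp Require Import ring lra.
Import GRing.Theory Num.Theory.

Definition Fp N M (rho psi : 'I_M -> nat) (r : 'I_M) (j : 'I_N) (x : 'I_M) :
  pred ({set 'I_N} * {set 'I_N}) :=
  [pred p | vp (rho x) (psi x) p && ((x == r) ==> (j \in p.2))].

Lemma memS N M (rho psi : 'I_M -> nat) r (j : 'I_N) (c : config N M) :
  (c \in [set c : config N M | valid_config rho psi c && (j \in Wants c r)]) =
  (c \in family (Fp rho psi r j)).
Proof.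
rewrite inE; apply/andP/familyP.
- move=> [/forallP hv hj] x; rewrite inE /=; have := hv x.
  rewrite /vp /Has /Wants /Lacks => ->; case: eqP => //= ->; exact: hj.
- move=> H; split.
    by apply/forallP => x; have := H x; rewrite inE => /andP [].
  by have := H r; rewrite inE eqxx /= => /andP [].
Qed.

Lemma num_decomp N M (rho psi : 'I_M -> nat) r (j : 'I_N) :
  let F := Fp rho psi r j in
  let P k := \prod_(x | (x != r) && (x != k)) #|F x| in
  \sum_(c in family F) primary_degree c (r, j) =
  \sum_(k | k != r) \sum_(l : 'I_N)
     (#|F r| * (\sum_(q in F k) (l == j) * (l \in q.2)) * P k +
      (\sum_(p in F r) (l \in p.1)) * (\sum_(q in F k) (j \in q.1) * (l \in q.2)) * P k).
Proof.
move=> F P.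
rewrite (eq_bigr (fun c : config N M => \sum_(k | k != r) \sum_(l : 'I_N)
     ((l == j) * (l \in (c k).2) + (l \in (c r).1) * ((j \in (c k).1) * (l \in (c k).2))))); last first.
  move=> c /familyP hc; apply: deg_decomp.
    by move=> k; have := hc k; rewrite inE /vp => /andP [/and3P [] ].
  by have := hc r; rewrite inE eqxx => /andP [].
rewrite exchange_big; apply: eq_bigr => k kr.
rewrite exchange_big; apply: eq_bigr => l _.
rewrite big_split /=; congr (_ + _).
  rewrite -sum1_card.
  rewrite -(sum_family2 F (fun _ => 1) (fun q => (l == j) * (l \in q.2))); last by rewrite eq_sym.
  by apply: eq_bigr => c _; rewrite mul1n.
rewrite -(sum_family2 F (fun p => (l \in p.1:nat)) (fun q => (j \in q.1) * (l \in q.2))); last by rewrite eq_sym.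
by [].
Qed.

Lemma per_k_alg (n : nat) (j : 'I_n) (Br Ak Bk Zk rr rk pk : nat) (S1 X Y : 'I_n -> nat) :
 1 < n -> 0 < Br -> 0 < Ak ->
 \sum_l S1 l = Bk -> n * Bk = pk * Ak -> X j = 0 ->
 (forall l, l != j -> n.-1 * X l = rr * Br) -> (forall l, l != j -> n.-1 * Y l = pk * Zk) ->
 n * Zk = rk * Ak ->
 ((\sum_l (Br * S1 l + X l * Y l))%:R / (Br * Ak)%:R : rat) =
   (pk%:R / n%:R + (rr * rk * pk)%:R / (n * n.-1)%:R)%R.
Proof.
move=> n1 Br0 Ak0 hS1 hB hXj hX hY hZ.
rewrite big_split /= -big_distrr /= hS1 (bigD1 j) //= hXj mul0n add0n.
set Q := \sum_(i < n | i != j) X i * Y i.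
have m_gt0 : 0 < n.-1 by rewrite -subn1 subn_gt0.
have hQ : n.-1 * Q = rr * Br * pk * Zk.
  have e : n.-1 * n.-1 * Q = n.-1 * (rr * Br * pk * Zk).
    rewrite /Q big_distrr /= (eq_bigr (fun _ => rr * Br * pk * Zk)).
      by rewrite sum_nat_const cardC1 card_ord.
    move=> l lj; rewrite mulnA [_ * X l]mulnC -!mulnA [X l * _]mulnA.
    by rewrite (hY l lj) [X l * _]mulnC mulnA (hX l lj) -!mulnA.
  by apply/eqP; rewrite -(eqn_pmul2l m_gt0) mulnA e.
have n0 : (n%:R : rat) != 0%R by rewrite pnatr_eq0 -lt0n (ltnW n1).
have m0 : (n.-1%:R : rat) != 0%R by rewrite pnatr_eq0 -lt0n.
have Br0' : (Br%:R : rat) != 0%R by rewrite pnatr_eq0 -lt0n.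
have Ak0' : (Ak%:R : rat) != 0%R by rewrite pnatr_eq0 -lt0n.
have eB : (Bk%:R : rat) = (pk%:R * Ak%:R / n%:R)%R.
  by apply: (mulfI n0); rewrite mulrCA mulfV // mulr1 -!natrM hB.
have eZ : (Zk%:R : rat) = (rk%:R * Ak%:R / n%:R)%R.
  by apply: (mulfI n0); rewrite mulrCA mulfV // mulr1 -!natrM hZ.
have eQ : (Q%:R : rat) = (rr%:R * Br%:R * pk%:R * Zk%:R / n.-1%:R)%R.
  by apply: (mulfI m0); rewrite mulrCA mulfV // mulr1 -!natrM hQ.
rewrite natrD !natrM eQ eZ eB.
by field; rewrite ?n0 ?m0 ?Br0' ?Ak0'.
Qed.

Lemma sum_in_bool (T : finType) (A : pred T) (b : pred T) :
  \sum_(p in A) (b p : nat) = \sum_p (A p && b p).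
Proof. rewrite big_mkcond; apply: eq_bigr => p _; rewrite unfold_in; by case: (A p). Qed.

Lemma card_sumb (T : finType) (A : pred T) : #|A| = \sum_p (A p : nat).
Proof. rewrite -sum1_card big_mkcond; apply: eq_bigr => p _; rewrite unfold_in; by case: (A p). Qed.

Lemma E_formula N M (rho psi : 'I_M -> nat) r (j : 'I_N) :
  1 < N -> (forall k, rho k + psi k <= N) -> 0 < psi r ->
  expected_degree rho psi r j =
   (\sum_(k | k != r) ((psi k)%:R / N%:R + (rho r * rho k * psi k)%:R / (N * N.-1)%:R))%R.
Proof.
move=> N1 hrp pr0.
set F := Fp rho psi r j.
have cFr : #|F r| = \sum_(p : {set 'I_N} * {set 'I_N}) (vp (rho r) (psi r) p && (j \in p.2)).
  by rewrite card_sumb /F /Fp; apply: eq_bigr => p _ /=; rewrite eqxx.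
have cFk : forall k, k != r -> #|F k| = cA N (rho k) (psi k).
  move=> k kr; rewrite card_sumb /F /Fp /cA; apply: eq_bigr => p _ /=.
  by rewrite (negbTE kr) !andbT.
have Ak0 : forall k, 0 < cA N (rho k) (psi k) by move=> k; exact: cA_gt0.
have hBr : N * #|F r| = psi r * cA N (rho r) (psi r).
  by rewrite cFr (@count1 N (rho r) (psi r) (psi r) snd j) // => p /and3P [_ _ /eqP].
have Br0 : 0 < #|F r|.
  by rewrite -(ltn_pmul2l (ltnW N1)) muln0 hBr muln_gt0 pr0 Ak0.
have F0 : forall x, 0 < #|F x|.
  by move=> x; case: (eqVneq x r) => [->|xr] //; rewrite cFk.
rewrite /expected_degree /=.
rewrite (eq_bigl (fun c => c \in family F)); last by move=> c; exact: memS.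
rewrite (eq_card (B := family F)); last by move=> c; exact: memS.
rewrite -natr_sum num_decomp natr_sum mulr_suml; apply: eq_bigr => k kr.
set P := \prod_(x | (x != r) && (x != k)) #|F x|.
have P0 : 0 < P by apply: prodn_gt0.
have hD : #|family F| = #|F r| * #|F k| * P.
  have rk : r != k by rewrite eq_sym.
  have := @sum_family2 M _ F r k (fun _ => 1) (fun _ => 1) rk.
  by rewrite !sum1_card => <-; rewrite -sum1_card.
rewrite hD; under eq_bigr => l _ do rewrite -mulnDl.
rewrite -big_distrl /= [X in (X / _)%R]natrM [X in (_ / X)%R]natrM.
rewrite -mulf_div divff ?mulr1; last by rewrite pnatr_eq0 -lt0n.
rewrite (cFk k kr).
apply: (@per_k_alg N j _ _ (\sum_(q : {set 'I_N} * {set 'I_N}) (vp (rho k) (psi k) q && (j \in q.2)))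
                  (\sum_(q : {set 'I_N} * {set 'I_N}) (vp (rho k) (psi k) q && (j \in q.1)))
                  (rho r) (rho k) (psi k) _ _ _ N1 Br0 (Ak0 k)) => //.
- rewrite exchange_big /= big_mkcond; apply: eq_bigr => q _.
  rewrite (bigD1 j) //= eqxx mul1n big1 ?addn0; last by move=> l /negbTE ->.
  by rewrite unfold_in /Fp /= (negbTE kr) andbT; case: (vp _ _ _).
- by rewrite (@count1 N (rho k) (psi k) (psi k) snd j) // => p /and3P [_ _ /eqP].
- rewrite big1 // => p; rewrite /F /Fp inE eqxx /= => /andP [/and3P [_ hs _] hj].
  by have := subsetP hs j hj; rewrite inE => /negbTE ->.
- move=> l lj; rewrite sum_in_bool cFr -(@count2 N (rho r) (psi r) (rho r) snd fst j l) //.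
  + by congr (_ * _); apply: eq_bigr => p _; rewrite /Fp /= eqxx /= andbA.
  + by move=> p /and3P [/eqP].
  + by move=> p /and3P [_ hs _] hj; have := subsetP hs j hj; rewrite inE.
- move=> l lj; rewrite -(@count2 N (rho k) (psi k) (psi k) fst snd j l) //.
  + congr (_ * _); rewrite big_mkcond; apply: eq_bigr => p _.
    by rewrite unfold_in /Fp /= (negbTE kr) andbT mulnb; case: (vp _ _ _).
  + by move=> p /and3P [_ _ /eqP].
  + move=> p /and3P [_ hs _]; apply: contraL => hj.
    by have := subsetP hs j hj; rewrite inE.
- by rewrite (@count1 N (rho k) (psi k) (rho k) fst j) // => p /and3P [/eqP].
Qed.

Theorem theorem2 (N M : nat) (rho psi : 'I_M -> nat) (i h : 'I_M) (j j' : 'I_N) :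
  2 <= N ->
  (forall k, rho k + psi k <= N) ->
  psi h < psi i -> 1 <= psi h -> rho i < rho h ->
  (expected_degree rho psi i j' < expected_degree rho psi h j)%R.
Proof.
move=> N2 hrp hpsi hh hrho.
have hi : 0 < psi i by apply: leq_trans hpsi.
have ih : i != h by apply/eqP => e; move: hpsi; rewrite e ltnn.
rewrite (E_formula _ N2 hrp hi) (E_formula _ N2 hrp hh).
rewrite (bigD1 h) /=; last by rewrite eq_sym.
rewrite [X in (_ < X)%R](bigD1 i) //=.
set D := ((N * N.-1)%:R : rat).
have D0 : (0 < D)%R by rewrite /D ltr0n muln_gt0 -subn1 subn_gt0 N2 (ltnW N2).
have N0 : (0 < (N%:R : rat))%R by rewrite ltr0n (ltnW N2).
apply: ltr_leD.
  apply: ltr_leD; first by rewrite ltr_pM2r ?invr_gt0 // ltr_nat.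
  by rewrite ler_wpM2r ?invr_ge0 ?ltW // ler_nat [rho i * _]mulnC leq_mul2l (ltnW hpsi) orbT.
rewrite (eq_bigl (fun k => (k != h) && (k != i))); last by move=> k; rewrite andbC.
apply: ler_sum => k _; rewrite lerD2l ler_wpM2r ?invr_ge0 ?ltW //.
by rewrite ler_nat -!mulnA leq_mul2r ltnW ?orbT.
Qed.
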